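(* Let $G$ be a graph. Then for every induced subgraph $H$ of $G$, \[\chi(G) \leq \frac{1}{2} \left(\omega(G) + \Delta(G) + 1 \right) + \frac{5\kappa(\overline{G}) + 3\chi(H) - |H|}{4}.\]
   Context: All graphs are finite and simple with non-empty vertex set; induced subgraphs have non-empty vertex set. $|G|$ denotes the number of vertices, $\chi$ the chromatic number, $\omega$ the clique number, $\Delta$ the maximum degree. $\overline{G}$ is the complement of $G$, and $\kappa(\overline{G})$ is its vertex connectivity: the minimum size of a set $K$ of vertices with $\overline{G}-K$ disconnected, or $|G|-1$ if $\overline{G}$ is complete. *)

(* Defs.v *)
From mathcomp Require Import all_boot all_order all_algebra.
Set Implicit Arguments. Unset Strict Implicit. Unset Printing Implicit Defensive.

(* A finite simple graph: vertex type T : finType, adjacency e : rel T,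
   assumed symmetric and irreflexive in the theorem statement. *)
Section GraphDefs.
Variables (T : finType) (e : rel T).

Definition colorable_on (S : {set T}) (k : nat) : bool :=
  [exists f : {ffun T -> 'I_k},
     [forall x in S, forall y in S, e x y ==> (f x != f y)]].

(* chromatic number of G[S]: least k such that G[S] is k-colourable
   (#|T| colours always suffice, so the default #|T| is never spurious). *)
Definition chi_on (S : {set T}) : nat :=
  \big[minn/#|T|]_(k < #|T|.+1 | colorable_on S k) k.

Definition chi : nat := chi_on [set: T].

Definition is_clique (A : {set T}) : bool :=
  [forall x in A, forall y in A, (x != y) ==> e x y].

Definition omega : nat := \max_(A : {set T} | is_clique A) #|A|.

Definition Delta : nat := \max_(x : T) #|[set y | e x y]|.

Definition compl_rel : rel T := fun x y => (x != y) && ~~ e x y.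

Definition compl_disconnected_by (K : {set T}) : bool :=
  [exists u, exists v,
     [&& u \notin K, v \notin K &
       ~~ connect (fun x y => [&& x \notin K, y \notin K & compl_rel x y]) u v]].

Definition compl_complete : bool :=
  [forall x, forall y, (x != y) ==> compl_rel x y].

Definition kappa_compl : nat :=
  if compl_complete then #|T| - 1
  else \big[minn/#|T|]_(K : {set T} | compl_disconnected_by K) #|K|.

End GraphDefs.

(* Main.v *)
Require Import Defs.
From mathcomp Require Import all_boot all_order all_algebra.
From mathcomp Require Import zify.
From mathcomp Require Import lra.
Import Order.TTheory GRing.Theory Num.Theory.
Set Implicit Arguments. Unset Strict Implicit. Unset Printing Implicit Defensive.

Section Graph.
Variables (T : finType) (e : rel T).
Hypothesis e_sym : symmetric e.
Hypothesis e_irr : irreflexive e.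

Definition pcol (C : eqType) (S : {set T}) (f : T -> C) :=
  forall x y, x \in S -> y \in S -> e x y -> f x != f y.

Definition chiP (S : {set T}) (m : nat) : bool :=
  [exists f : {ffun T -> T},
    [forall x in S, forall y in S, e x y ==> (f x != f y)] && (#|f @: S| <= m)].

Lemma properPb (S : {set T}) (f : {ffun T -> T}) :
  pcol S f -> [forall x in S, forall y in S, e x y ==> (f x != f y)].
Proof.
move=> Hf; apply/forallP => x; apply/implyP => xS; apply/forallP => y.
apply/implyP => yS; apply/implyP => exy; exact: Hf.
Qed.

Lemma properbP (S : {set T}) (f : {ffun T -> T}) :
  [forall x in S, forall y in S, e x y ==> (f x != f y)] -> pcol S f.
Proof.
move=> /forallP Hf x y xS yS exy.
by move: (Hf x); rewrite xS /= => /forallP /(_ y); rewrite yS exy.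
Qed.

Lemma chiP_ex (S : {set T}) : exists m, chiP S m.
Proof.
exists #|S|; apply/existsP; exists [ffun x => x]; apply/andP; split.
  apply: properPb => x y _ _ exy; rewrite !ffunE; apply/eqP => E.
  by rewrite E e_irr in exy.
exact: leq_imset_card.
Qed.

Definition mychi (S : {set T}) := ex_minn (chiP_ex S).

Lemma chi_spec (S : {set T}) : exists f : {ffun T -> T}, pcol S f /\ #|f @: S| <= mychi S.
Proof.
rewrite /mychi; case: ex_minnP => m /existsP [f /andP [Hp Hc]] _.
by exists f; split => //; apply: properbP.
Qed.

Lemma chi_minP (S : {set T}) m : chiP S m -> mychi S <= m.
Proof. by rewrite /mychi; case: ex_minnP => m0 _ /(_ m). Qed.

Lemma chi_card (S : {set T}) : mychi S <= #|S|.
Proof.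
apply: chi_minP; apply/existsP; exists [ffun x => x]; apply/andP; split.
  apply: properPb => x y _ _ exy; rewrite !ffunE; apply/eqP => E.
  by rewrite E e_irr in exy.
exact: leq_imset_card.
Qed.

Lemma chi_le (C : finType) (S : {set T}) (f : T -> C) : pcol S f -> mychi S <= #|f @: S|.
Proof.
move=> Hf.
case: (set_0Vmem S) => [->|[x0 Hx0]].
  by apply: leq_trans (chi_card _) _; rewrite cards0.
set A := f @: S.
have cA : #|A| <= #|T| by apply: leq_trans (leq_imset_card _ _) (max_card _).
pose h c := nth x0 (enum T) (index c (enum A)).
have hinj : {in A &, injective h}.
  move=> c1 c2 c1A c2A /eqP; rewrite /h nth_uniq ?enum_uniq //.
  - move/eqP => E; apply: (@index_inj _ c1 (enum A)) => //; by rewrite mem_enum.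
  - by rewrite -cardT (leq_trans _ cA) // cardE index_mem mem_enum.
  - by rewrite -cardT (leq_trans _ cA) // cardE index_mem mem_enum.
apply: chi_minP; apply/existsP; exists [ffun x => h (f x)]; apply/andP; split.
  apply: properPb => x y xS yS exy; rewrite !ffunE.
  apply/negP => /eqP E.
  have E' : f x = f y by apply: hinj => //; apply: imset_f.
  by move: (Hf x y xS yS exy); rewrite E' eqxx.
have -> : [ffun x => h (f x)] @: S = h @: A.
  by rewrite -imset_comp; apply: eq_imset => x; rewrite ffunE.
exact: leq_imset_card.
Qed.


Lemma properP_sub (C : eqType) (S1 S2 : {set T}) (f : T -> C) :
  S1 \subset S2 -> pcol S2 f -> pcol S1 f.
Proof. by move=> /subsetP sub Hf x y xS yS; apply: Hf; apply: sub. Qed.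

Lemma chi_sub (S1 S2 : {set T}) : S1 \subset S2 -> mychi S1 <= mychi S2.
Proof.
move=> sub; have [f [Hf Hc]] := chi_spec S2.
apply: leq_trans (chi_le (properP_sub sub Hf)) _.
by apply: leq_trans Hc; apply: subset_leq_card; apply: imsetS.
Qed.

Lemma chi_union (S1 S2 : {set T}) : mychi (S1 :|: S2) <= mychi S1 + mychi S2.
Proof.
have [f1 [Hf1 Hc1]] := chi_spec S1.
have [f2 [Hf2 Hc2]] := chi_spec S2.
pose g x : T + T := if x \in S1 then inl (f1 x) else inr (f2 x).
have Hg : pcol (S1 :|: S2) g.
  move=> x y xS yS exy; rewrite /g; case: ifP => Hx; case: ifP => Hy //.
    by move: (Hf1 x y Hx Hy exy); apply: contra => /eqP [->].
  move: xS yS; rewrite !inE Hx Hy /= => xS yS.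
  by move: (Hf2 x y xS yS exy); apply: contra => /eqP [->].
apply: leq_trans (chi_le Hg) _.
have sub : g @: (S1 :|: S2) \subset (inl @: (f1 @: S1)) :|: (inr @: (f2 @: S2)).
  apply/subsetP => c /imsetP [x xS ->]; rewrite /g; case: ifP => Hx.
    by rewrite inE; apply/orP; left; do 2 apply: imset_f.
  move: xS; rewrite inE Hx /= => xS.
  by rewrite inE; apply/orP; right; do 2 apply: imset_f.
apply: leq_trans (subset_leq_card sub) _.
apply: leq_trans (leq_card_setU _ _) _.
apply: leq_add; apply: leq_trans (leq_imset_card _ _) _ => //.
Qed.

Definition indepP (A : {set T}) := forall x y, x \in A -> y \in A -> ~~ e x y.
Definition cliqueP (A : {set T}) := forall x y, x \in A -> y \in A -> x != y -> e x y.

Lemma chi_indep (A : {set T}) : indepP A -> mychi A <= 1.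
Proof.
move=> HA.
have Hg : pcol A (fun _ : T => tt) by move=> x y xA yA exy; move: (HA x y xA yA); rewrite exy.
apply: leq_trans (chi_le Hg) _.
by apply: leq_trans (max_card _) _; rewrite card_unit.
Qed.

Lemma chi_pos (S : {set T}) x : x \in S -> 0 < mychi S.
Proof.
move=> xS; have [f [Hf Hc]] := chi_spec S.
apply: leq_trans Hc; rewrite card_gt0; apply/set0Pn; exists (f x); exact: imset_f.
Qed.

Lemma chi0 : mychi set0 = 0.
Proof. by apply/eqP; rewrite -leqn0; apply: leq_trans (chi_card _) _; rewrite cards0. Qed.

Lemma chi_join (H1 H2 : {set T}) :
  (forall x y, x \in H1 -> y \in H2 -> e x y) ->
  mychi H1 + mychi H2 <= mychi (H1 :|: H2).
Proof.
move=> Hj; have [f [Hf Hc]] := chi_spec (H1 :|: H2).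
have Hf1 : pcol H1 f by apply: properP_sub Hf; apply: subsetUl.
have Hf2 : pcol H2 f by apply: properP_sub Hf; apply: subsetUr.
apply: leq_trans Hc.
rewrite imsetU cardsU.
have -> : f @: H1 :&: f @: H2 = set0.
  apply/setP => c; rewrite !inE; apply/negP => /andP [/imsetP [x xH ->] /imsetP [y yH E]].
  move: (Hf x y (subsetP (subsetUl _ _) _ xH) (subsetP (subsetUr _ _) _ yH) (Hj x y xH yH)).
  by rewrite E eqxx.
by rewrite cards0 subn0; apply: leq_add; apply: chi_le.
Qed.


Definition omega_on (S : {set T}) :=
  \max_(A : {set T} | (A \subset S) && is_clique e A) #|A|.

Lemma is_cliqueP (A : {set T}) : reflect (cliqueP A) (is_clique e A).
Proof.
apply: (iffP forallP) => [H x y xA yA nxy | H x].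
  by move: (H x); rewrite xA /= => /forallP /(_ y); rewrite yA nxy.
apply/implyP => xA; apply/forallP => y; apply/implyP => yA; apply/implyP; exact: H.
Qed.

Lemma om_ge (S A : {set T}) : A \subset S -> cliqueP A -> #|A| <= omega_on S.
Proof.
move=> sub cl; rewrite /omega_on; apply: (leq_bigmax_cond (F := fun A : {set T} => #|A|)).
by rewrite sub; apply/is_cliqueP.
Qed.

Lemma om_sub (S1 S2 : {set T}) : S1 \subset S2 -> omega_on S1 <= omega_on S2.
Proof.
move=> sub; apply/bigmax_leqP => A /andP [sA /is_cliqueP cl].
by apply: om_ge => //; apply: subset_trans sub.
Qed.

Lemma om_spec (S : {set T}) :
  exists A : {set T}, [/\ A \subset S, cliqueP A & #|A| = omega_on S].
Proof.
have [|A HA E] := eq_bigmax_cond (fun A : {set T} => #|A|)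
   (A := [pred A : {set T} | (A \subset S) && is_clique e A]).
  apply/card_gt0P; exists set0; rewrite inE sub0set /=.
  by apply/is_cliqueP => x y; rewrite inE.
move: HA; rewrite inE => /andP [sA /is_cliqueP cl].
by exists A; split => //; rewrite /omega_on E.
Qed.

Lemma om_pos (S : {set T}) x : x \in S -> 0 < omega_on S.
Proof.
move=> xS; apply: leq_trans (om_ge (A := [set x]) _ _); first by rewrite cards1.
  by rewrite sub1set.
by move=> a b; rewrite !inE => /eqP -> /eqP ->; rewrite eqxx.
Qed.

Lemma chi_om n (S : {set T}) : #|S| <= n -> 2 * mychi S <= #|S| + omega_on S.
Proof.
elim: n S => [|n IH] S HS.
  have cs : #|S| = 0 by apply/eqP; rewrite -leqn0.
  by have := chi_card S; rewrite cs; lia.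
case: (boolP (is_clique e S)) => [/is_cliqueP cl | ncl].
  have := om_ge (subxx S) cl; have := chi_card S; lia.
have [x [y [xS yS nxy ne]]] : exists x y, [/\ x \in S, y \in S, x != y & ~~ e x y].
  move: ncl => /forallPn [x]; rewrite negb_imply => /andP [xS /forallPn [y]].
  rewrite negb_imply => /andP [yS]; rewrite negb_imply => /andP [nxy ne].
  by exists x, y.
set S' := S :\ x :\ y.
have cS' : #|S'| + 2 = #|S|.
  rewrite /S' (cardsD1 x S) xS (cardsD1 y (S :\ x)) !inE eq_sym nxy yS /=; lia.
have sub : S \subset S' :|: [set x; y].
  apply/subsetP => z zS; rewrite !inE zS; by case: (z == x); case: (z == y).
have c2 : mychi [set x; y] <= 1.
  apply: chi_indep => a b; rewrite !inE => /orP [] /eqP -> /orP [] /eqP ->;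
    by rewrite ?e_irr // e_sym.
have := chi_sub sub; have := chi_union S' [set x; y].
have := IH S' ltac:(lia).
have : omega_on S' <= omega_on S by apply: om_sub; apply: subset_trans (subD1set _ _) (subD1set _ _).
lia.
Qed.


Lemma chi_omH (S H : {set T}) : H \subset S ->
  2 * mychi S + #|H| <= 2 * mychi H + #|S| + omega_on S.
Proof.
move=> sHS.
have sub : S \subset H :|: (S :\: H) by apply/subsetP => z zS; rewrite !inE zS; case: (z \in H).
have cD : #|S :\: H| + #|H| = #|S|.
  by rewrite cardsD (setIidPr sHS) subnK // subset_leq_card.
have := chi_sub sub; have := chi_union H (S :\: H).
have := chi_om (leqnn _) (S := S :\: H).
have : omega_on (S :\: H) <= omega_on S by apply: om_sub; apply: subsetDl.
lia.
Qed.

Definition indepb (A : {set T}) := [forall x in A, forall y in A, ~~ e x y].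

Lemma indepbP (A : {set T}) : reflect (indepP A) (indepb A).
Proof.
apply: (iffP forallP) => [H x y xA yA | H x].
  by move: (H x); rewrite xA /= => /forallP /(_ y); rewrite yA.
apply/implyP => xA; apply/forallP => y; apply/implyP => yA; exact: H.
Qed.

Lemma indep_ext (S I0 : {set T}) : I0 \subset S -> indepP I0 ->
  exists I : {set T}, [/\ I0 \subset I, I \subset S, indepP I &
    forall z, z \in S -> z \notin I -> exists2 w, w \in I & e z w].
Proof.
move=> sI0 iI0.
pose P (I : {set T}) := [&& I0 \subset I, I \subset S & indepb I].
have PI0 : P I0 by rewrite /P subxx sI0; apply/indepbP.
case: (arg_maxnP (fun I : {set T} => #|I|) PI0) => I /and3P [s1 s2 /indepbP iI] Hmax.
exists I; split => // z zS znI.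
apply/exists_inP; apply: contraT => /exists_inPn Hn.
have PzI : P (z |: I).
  rewrite /P (subset_trans s1 (subsetUr _ _)) /= subUset sub1set zS s2 /=.
  apply/indepbP => a b; rewrite !inE => /orP [/eqP ->|aI] /orP [/eqP ->|bI].
  - by rewrite e_irr.
  - exact: Hn.
  - by rewrite e_sym; apply: Hn.
  - exact: iI.
have := Hmax _ PzI; rewrite cardsU1 znI /=; lia.
Qed.

Definition Delta_on (S : {set T}) := \max_(x in S) #|[set y in S | e x y]|.

Lemma Delta_ge (S : {set T}) x : x \in S -> #|[set y in S | e x y]| <= Delta_on S.
Proof. by move=> xS; rewrite /Delta_on; apply: (leq_bigmax_cond (F := fun x => #|[set y in S | e x y]|)). Qed.

Lemma Delta_sub (S1 S2 : {set T}) : S1 \subset S2 -> Delta_on S1 <= Delta_on S2.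
Proof.
move=> sub; apply/bigmax_leqP => x xS1.
apply: leq_trans (Delta_ge (subsetP sub _ xS1)).
apply: subset_leq_card; apply/subsetP => y; rewrite !inE => /andP [yS ->].
by rewrite (subsetP sub _ yS).
Qed.

Lemma Delta_spec (S : {set T}) x0 : x0 \in S ->
  exists2 x, x \in S & Delta_on S = #|[set y in S | e x y]|.
Proof.
move=> x0S.
have [|x xS E] := eq_bigmax_cond (fun x => #|[set y in S | e x y]|) (A := [pred x | x \in S]).
  by apply/card_gt0P; exists x0.
by exists x => //; rewrite /Delta_on -E.
Qed.

Lemma Delta_drop (S S' : {set T}) x0 : S' \subset S -> x0 \in S' ->
  (forall z, z \in S' -> exists2 w, w \in S :\: S' & e z w) ->
  Delta_on S' < Delta_on S.
Proof.
move=> sub x0S' Hw.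
have [z zS' ->] := Delta_spec x0S'.
apply: leq_trans (Delta_ge (subsetP sub _ zS')).
have [w wD ezw] := Hw z zS'.
apply: proper_card; apply/properP; split.
  apply/subsetP => y; rewrite !inE => /andP [yS ->]; by rewrite (subsetP sub _ yS).
exists w; move: wD; rewrite !inE => /andP [wn wS]; first by rewrite wS ezw.
by rewrite (negbTE wn).
Qed.


Lemma img2 (A : {set T}) (f : T -> T) :
  (forall x, x \in A -> exists2 y, y \in A & (y != x) && (f y == f x)) ->
  2 * #|f @: A| <= #|A|.
Proof.
move=> H.
have -> : 2 * #|f @: A| = \sum_(c in f @: A) 2 by rewrite sum_nat_const mulnC.
rewrite -[#|A|]sum1_card [X in _ <= X](partition_big_imset f) /=.
apply: leq_sum => c /imsetP [x xA ->].
rewrite sum1dep_card.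
have [y yA /andP [nyx fyx]] := H x xA.
have <- : #|[set x; y]| = 2 by rewrite cards2 eq_sym nyx.
apply: subset_leq_card; apply/subsetP => z; rewrite !inE => /orP [] /eqP ->.
  by rewrite xA eqxx.
by rewrite yA fyx.
Qed.

Lemma recolor (S : {set T}) (f g : T -> T) c :
  #|f @: S| <= mychi S -> pcol S g ->
  (forall x, x \in S -> g x \in f @: S) ->
  c \in f @: S -> (forall x, x \in S -> g x != c) -> False.
Proof.
move=> Hk Hg Himg Hc Hnc.
have sub : g @: S \subset (f @: S) :\ c.
  apply/subsetP => d /imsetP [x xS ->]; rewrite !inE Hnc //; exact: Himg.
have := subset_leq_card sub; have := cardsD1 c (f @: S); rewrite Hc.
have := chi_le Hg; lia.
Qed.


Definition no3 (S : {set T}) := forall x y z, x \in S -> y \in S -> z \in S ->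
  x != y -> y != z -> x != z -> [|| e x y, e y z | e x z].

Lemma T2 (S : {set T}) : no3 S ->
  4 * mychi S <= 2 * omega_on S + #|S| + Delta_on S + 1.
Proof.
move=> H3.
have [f [Hf Hk]] := chi_spec S.
have Hk' := chi_le Hf.
have ne_same : forall x y, x \in S -> y \in S -> f x = f y -> ~~ e x y.
  move=> x y xS yS E; apply/negP => exy.
  by move: (Hf x y xS yS exy); rewrite E eqxx.
have class3 : forall x y z, x \in S -> y \in S -> z \in S -> f x = f y -> f x = f z ->
    [\/ x = y, y = z | x = z].
  move=> x y z xS yS zS E1 E2.
  case: (eqVneq x y) => [->|nxy]; first by constructor 1.
  case: (eqVneq y z) => [->|nyz]; first by constructor 2.
  case: (eqVneq x z) => [->|nxz]; first by constructor 3.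
  move: (H3 x y z xS yS zS nxy nyz nxz).
  rewrite (negbTE (ne_same x y xS yS E1)) (negbTE (ne_same x z xS zS E2)).
  by rewrite (negbTE (ne_same y z yS zS _)) //; rewrite -E1 E2.
set U := [set x in S | [forall z in S, (f z == f x) ==> (z == x)]].
have inU : forall u, u \in U -> u \in S /\ forall z, z \in S -> f z = f u -> z = u.
  move=> u; rewrite inE => /andP [uS /forallP H]; split => // z zS E.
  by move: (H z); rewrite zS E eqxx /= => /eqP.
have notinU : forall y, y \in S -> y \notin U -> exists2 z, z \in S & (z != y) && (f z == f y).
  move=> y yS; rewrite inE yS /= => /forallPn [z]; rewrite negb_imply => /andP [zS].
  rewrite negb_imply => /andP [E nzy]; by exists z; rewrite // nzy.
have sUS : U \subset S by apply/subsetP => x; rewrite inE => /andP [].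
have count : 2 * mychi S <= #|S| + #|U|.
  have SU : S = U :|: (S :\: U) by rewrite -{1}(setID S U) (setIidPr sUS).
  have cS : #|S| = #|U| + #|S :\: U| by rewrite -(cardsID U S) (setIidPr sUS).
  have c1 : #|f @: S| <= #|f @: U| + #|f @: (S :\: U)|.
    by rewrite {1}SU imsetU; apply: leq_card_setU.
  have c2 : #|f @: U| <= #|U| := leq_imset_card _ _.
  have c3 : 2 * #|f @: (S :\: U)| <= #|S :\: U|.
    apply: img2 => x; rewrite inE => /andP [xnU xS].
    have [z zS /andP [nzx /eqP fzx]] := notinU x xS xnU.
    exists z => //; last by rewrite nzx fzx eqxx.
    rewrite inE zS andbT; apply/negP => /inU [_ Hz].
    by move: nzx; rewrite (Hz x xS (esym fzx)) eqxx.
  lia.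
have R1 : forall u1 u2, u1 \in U -> u2 \in U -> u1 != u2 -> e u1 u2.
  move=> u1 u2 /inU [u1S s1] /inU [u2S s2] n12; apply: contraT => ne12; exfalso.
  pose g x := if x == u2 then f u1 else f x.
  apply: (@recolor S f g (f u2) Hk).
  - move=> x z xS zS exz; rewrite /g.
    case: (eqVneq x u2) => [Ex|nx]; case: (eqVneq z u2) => [Ez|nz].
    + by subst; rewrite e_irr in exz.
    + apply/eqP => E; move: (s1 z zS (esym E)) => Ez1; subst.
      by rewrite e_sym exz in ne12.
    + apply/eqP => E; move: (s1 x xS E) => Ex1; subst.
      by rewrite exz in ne12.
    + exact: Hf.
  - by move=> x xS; rewrite /g; case: ifP => _; apply: imset_f.
  - exact: imset_f.
  - move=> x xS; rewrite /g; case: ifP => [_|/negbT nx].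
      by apply/eqP => E; move: n12; rewrite (s2 u1 u1S E) eqxx.
    by apply/eqP => E; move: nx; rewrite (s2 x xS E) eqxx.
have hasv : S = set0 \/ exists2 v, v \in S &
    2 * #|U| + #|[set y in S | (y != v) && ~~ e v y]| <= 2 * omega_on S.
  have Ncl : forall v, v \in S -> cliqueP [set y in S | (y != v) && ~~ e v y].
    move=> v vS y1 y2; rewrite !inE => /and3P [y1S n1 e1] /and3P [y2S n2 e2] n12.
    have := H3 v y1 y2 vS y1S y2S ltac:(by rewrite eq_sym) n12 ltac:(by rewrite eq_sym).
    by rewrite (negbTE e1) (negbTE e2) /= orbF.
  case: (set_0Vmem S) => [S0|[v0 v0S]]; first by left.
  right.
  case: (set_0Vmem U) => [U0 | [u uU]].
    exists v0 => //; rewrite U0 cards0 muln0 add0n.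
    have := om_ge (A := [set y in S | (y != v0) && ~~ e v0 y]) (S := S) _ (Ncl v0 v0S).
    have -> : [set y in S | (y != v0) && ~~ e v0 y] \subset S.
      by apply/subsetP => y; rewrite inE => /andP [].
    move=> /(_ isT); lia.
  have [uS su] := inU u uU.
  exists u => //.
  set N := [set y in S | (y != u) && ~~ e u y].
  have inN : forall y, y \in N -> [/\ y \in S, y != u & ~~ e u y].
    by move=> y; rewrite inE => /and3P [].
  have NU : forall y, y \in N -> y \notin U.
    move=> y /inN [yS nyu euy]; apply/negP => yU.
    by move: (R1 y u yU uU nyu); rewrite e_sym (negbTE euy).
  pose p y := odflt y [pick z in S | (z != y) && (f z == f y)].
  have pP : forall y, y \in N -> [/\ p y \in S, p y != y & f (p y) = f y].
    move=> y yN; have [yS _ _] := inN y yN.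
    have [z zS /andP [nzy /eqP fz]] := notinU y yS (NU y yN).
    rewrite /p; case: pickP => [z' /and3P [z'S nz' /eqP fz'] | /(_ z)]; first by [].
    by rewrite zS nzy fz eqxx.
  have pU : forall y, y \in N -> p y \notin U.
    move=> y yN; have [pyS npy fpy] := pP y yN; have [yS _ _] := inN y yN.
    apply/negP => /inU [_ s']; by move: npy; rewrite -(s' y yS (esym fpy)) eqxx.
  have cls : forall y z, y \in N -> z \in S -> f z = f y -> z = y \/ z = p y.
    move=> y z yN zS fz; have [pyS npy fpy] := pP y yN; have [yS _ _] := inN y yN.
    case: (class3 y (p y) z yS pyS zS (esym fpy) (esym fz)) => E.
    - by move: npy; rewrite -E eqxx.
    - by right.
    - by left.
  have pinj : {in N &, injective p}.
    move=> y1 y2 y1N y2N E; have [p1S np1 fp1] := pP y1 y1N; have [p2S np2 fp2] := pP y2 y2N.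
    have [y2S _ _] := inN y2 y2N.
    case: (cls y1 y2 y1N y2S _) => //; first by rewrite -fp2 -E fp1.
    by move=> E2; move: np2; rewrite -E -E2 eqxx.
  have Ub : forall y w, y \in N -> w \in U -> e (p y) w.
    move=> y w yN wU; have [yS nyu euy] := inN y yN; have [pyS npy fpy] := pP y yN.
    have [wS sw] := inU w wU.
    case: (eqVneq w u) => [->|nwu].
      have nupy : u != p y by apply/eqP => E; move: (pU y yN); rewrite -E uU.
      have := H3 u y (p y) uS yS pyS ltac:(by rewrite eq_sym) ltac:(by rewrite eq_sym) nupy.
      by rewrite (negbTE euy) (negbTE (ne_same y (p y) yS pyS (esym fpy))) /= e_sym.
    apply: contraT => ne; exfalso.
    pose g x := if x == y then f u else if x == p y then f w else f x.
    have gy : g y = f u by rewrite /g eqxx.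
    have gpy : g (p y) = f w by rewrite /g (negbTE npy) eqxx.
    have go : forall x, x != y -> x != p y -> g x = f x.
      by move=> x n1 n2; rewrite /g (negbTE n1) (negbTE n2).
    have Hcase : forall x, [\/ x = y, x = p y | (x != y) && (x != p y)].
      move=> x; case: (eqVneq x y) => [->|n1]; first by constructor 1.
      case: (eqVneq x (p y)) => [->|n2]; first by constructor 2.
      by constructor 3; apply/andP.
    apply: (@recolor S f g (f y) Hk).
    - move=> x z xS zS.
      case: (Hcase x) => [->|->|/andP [n1 n2]]; case: (Hcase z) => [->|->|/andP [m1 m2]] => exz.
      + by rewrite e_irr in exz.
      + by rewrite gy gpy; apply/eqP => E; move: nwu; rewrite (sw u uS E) eqxx.
      + rewrite gy (go z m1 m2).
        by apply/eqP => E; move: exz; rewrite (su z zS (esym E)) e_sym (negbTE euy).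
      + by rewrite gy gpy; apply/eqP => E; move: nwu; rewrite (su w wS E) eqxx.
      + by rewrite e_irr in exz.
      + rewrite gpy (go z m1 m2).
        by apply/eqP => E; move: exz; rewrite (sw z zS (esym E)) (negbTE ne).
      + rewrite gy (go x n1 n2).
        by apply/eqP => E; move: exz; rewrite (su x xS E) (negbTE euy).
      + rewrite gpy (go x n1 n2).
        by apply/eqP => E; move: exz; rewrite (sw x xS E) e_sym (negbTE ne).
      + by rewrite (go x n1 n2) (go z m1 m2); apply: Hf.
    - move=> x xS; case: (Hcase x) => [->|->|/andP [n1 n2]].
      + by rewrite gy; apply: imset_f.
      + by rewrite gpy; apply: imset_f.
      + by rewrite (go x n1 n2); apply: imset_f.
    - exact: imset_f.
    - move=> x xS; case: (Hcase x) => [->|->|/andP [n1 n2]].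
      + by rewrite gy; apply/eqP => E; move: nyu; rewrite (su y yS (esym E)) eqxx.
      + by rewrite gpy; apply/eqP => E; move: (NU y yN); rewrite (sw y yS (esym E)) wU.
      + rewrite (go x n1 n2); apply/eqP => E; case: (cls y x yN xS E) => E'.
        * by move: n1; rewrite E' eqxx.
        * by move: n2; rewrite E' eqxx.
  have R3 : forall y1 y2 w, y1 \in N -> y2 \in N -> y1 != y2 -> w \in U -> w != u ->
      ~~ e y1 w -> e (p y1) (p y2).
    move=> y1 y2 w y1N y2N n12 wU nwu ne1w.
    have [y1S n1u eu1] := inN y1 y1N; have [y2S n2u eu2] := inN y2 y2N.
    have [p1S np1 fp1] := pP y1 y1N; have [p2S np2 fp2] := pP y2 y2N.
    have [wS sw] := inU w wU.
    case: (eqVneq (f y1) (f y2)) => [E12|d12].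
      case: (cls y1 y2 y1N y2S (esym E12)) => [E|E]; first by move: n12; rewrite E eqxx.
      case: (cls y2 y1 y2N y1S E12) => [E'|E']; first by move: n12; rewrite E' eqxx.
      rewrite -E -E'; apply: (Ncl u uS y2 y1 y2N y1N); by rewrite eq_sym.
    apply: contraT => ne; exfalso.
    have n1p2 : y1 != p y2 by apply/eqP => E; move: d12; rewrite E fp2 eqxx.
    have n2p1 : y2 != p y1 by apply/eqP => E; move: d12; rewrite E fp1 eqxx.
    pose g x := if x == y1 then f w else if x == p y2 then f y1 else if x == y2 then f u else f x.
    have gy1 : g y1 = f w by rewrite /g eqxx.
    have gp2 : g (p y2) = f y1 by rewrite /g eq_sym (negbTE n1p2) eqxx.
    have n21 : y2 != y1 by rewrite eq_sym.
    have n2p : y2 != p y2 by rewrite eq_sym.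
    have gy2 : g y2 = f u by rewrite /g (negbTE n21) (negbTE n2p) eqxx.
    have go : forall x, x != y1 -> x != p y2 -> x != y2 -> g x = f x.
      by move=> x a b c; rewrite /g (negbTE a) (negbTE b) (negbTE c).
    have Hcase : forall x, x = y1 \/ x = p y2 \/ x = y2 \/ [&& x != y1, x != p y2 & x != y2].
      move=> x; case: (eqVneq x y1) => [->|a]; first by left.
      case: (eqVneq x (p y2)) => [->|b]; first by right; left.
      case: (eqVneq x y2) => [->|c]; first by right; right; left.
      by right; right; right; apply/and3P.
    have y1nU := NU y1 y1N; have y2nU := NU y2 y2N.
    apply: (@recolor S f g (f y2) Hk).
    - move=> x z xS zS.
      case: (Hcase x) => [->|[->|[->|/and3P [a1 a2 a3]]]];
      case: (Hcase z) => [->|[->|[->|/and3P [b1 b2 b3]]]] => exz.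
      + by rewrite e_irr in exz.
      + by rewrite gy1 gp2; apply/eqP => E; move: y1nU; rewrite (sw y1 y1S (esym E)) wU.
      + by rewrite gy1 gy2; apply/eqP => E; move: nwu; rewrite (su w wS E) eqxx.
      + rewrite gy1 (go z b1 b2 b3); apply/eqP => E.
        by move: exz; rewrite (sw z zS (esym E)) (negbTE ne1w).
      + by rewrite gy1 gp2; apply/eqP => E; move: y1nU; rewrite (sw y1 y1S E) wU.
      + by rewrite e_irr in exz.
      + by rewrite gp2 gy2; apply/eqP => E; move: n1u; rewrite (su y1 y1S E) eqxx.
      + rewrite gp2 (go z b1 b2 b3); apply/eqP => E.
        case: (cls y1 z y1N zS (esym E)) => E'; first by move: b1; rewrite E' eqxx.
        by move: exz; rewrite E' e_sym (negbTE ne).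
      + by rewrite gy2 gy1; apply/eqP => E; move: nwu; rewrite (sw u uS E) eqxx.
      + by rewrite gy2 gp2; apply/eqP => E; move: n1u; rewrite (su y1 y1S (esym E)) eqxx.
      + by rewrite e_irr in exz.
      + rewrite gy2 (go z b1 b2 b3); apply/eqP => E.
        by move: exz; rewrite (su z zS (esym E)) e_sym (negbTE eu2).
      + rewrite gy1 (go x a1 a2 a3); apply/eqP => E.
        by move: exz; rewrite (sw x xS E) e_sym (negbTE ne1w).
      + rewrite gp2 (go x a1 a2 a3); apply/eqP => E.
        case: (cls y1 x y1N xS E) => E'; first by move: a1; rewrite E' eqxx.
        by move: exz; rewrite E' (negbTE ne).
      + rewrite gy2 (go x a1 a2 a3); apply/eqP => E.
        by move: exz; rewrite (su x xS E) (negbTE eu2).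
      + by rewrite (go x a1 a2 a3) (go z b1 b2 b3); apply: Hf.
    - move=> x xS; case: (Hcase x) => [->|[->|[->|/and3P [a1 a2 a3]]]].
      + by rewrite gy1; apply: imset_f.
      + by rewrite gp2; apply: imset_f.
      + by rewrite gy2; apply: imset_f.
      + by rewrite (go x a1 a2 a3); apply: imset_f.
    - exact: imset_f.
    - move=> x xS; case: (Hcase x) => [->|[->|[->|/and3P [a1 a2 a3]]]].
      + by rewrite gy1; apply/eqP => E; move: y2nU; rewrite (sw y2 y2S (esym E)) wU.
      + by rewrite gp2.
      + by rewrite gy2; apply/eqP => E; move: n2u; rewrite (su y2 y2S (esym E)) eqxx.
      + rewrite (go x a1 a2 a3); apply/eqP => E.
        case: (cls y2 x y2N xS E) => E'; first by move: a3; rewrite E' eqxx.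
        by move: a2; rewrite E' eqxx.
  set P := [set y in N | [forall w in U, (w != u) ==> e y w]].
  set Q := N :\: P.
  have sPN : P \subset N by apply/subsetP => y; rewrite inE => /andP [].
  have cN : #|N| = #|P| + #|Q| by rewrite -(cardsID P N) (setIidPr sPN).
  have Qw : forall y, y \in Q -> exists2 w, w \in U & (w != u) && ~~ e y w.
    move=> y; rewrite !inE => /andP [/negP nP yN]; apply/exists_inP.
    apply: contraT => /exists_inPn Hn; exfalso; apply: nP; apply/andP; split => //.
    apply/forall_inP => w wU; apply/implyP => nwu.
    by move: (Hn w wU); rewrite nwu /= negbK.
  have NnU : forall y, y \in N -> y \notin U by exact: NU.
  have KR : forall R : {set T}, R \subset N ->
      (forall y1 y2, y1 \in R -> y2 \in R -> y1 != y2 -> (y1 \in Q) || (y2 \in Q)) ->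
      #|U| + #|R| <= omega_on S.
    move=> R sRN HR.
    have pinjR : {in R &, injective p}.
      by move=> a b aR bR; apply: pinj; apply: (subsetP sRN).
    apply: leq_trans (om_ge (A := U :|: p @: R) _ _).
    - rewrite cardsU (card_in_imset pinjR).
      have -> : U :&: p @: R = set0.
        apply/setP => z; rewrite in_setI in_set0; apply/negP => /andP [zU /imsetP [y yR E]].
        by move: (pU y (subsetP sRN _ yR)); rewrite -E zU.
      by rewrite cards0 subn0.
    - rewrite subUset sUS /=; apply/subsetP => z /imsetP [y yR ->].
      by have [] := pP y (subsetP sRN _ yR).
    - move=> a b; rewrite !in_setU => /orP [aU|/imsetP [y1 y1R ->]] /orP [bU|/imsetP [y2 y2R ->]] nab.
      + exact: R1.
      + by rewrite e_sym; apply: Ub => //; apply: (subsetP sRN).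
      + by apply: Ub => //; apply: (subsetP sRN).
      + have n12 : y1 != y2 by apply: contraNneq nab => ->.
        have y1N := subsetP sRN _ y1R; have y2N := subsetP sRN _ y2R.
        case/orP: (HR y1 y2 y1R y2R n12) => [y1Q|y2Q].
          have [w wU /andP [nwu new]] := Qw y1 y1Q.
          exact: (R3 y1 y2 w).
        have [w wU /andP [nwu new]] := Qw y2 y2Q.
        by rewrite e_sym; apply: (R3 y2 y1 w) => //; rewrite eq_sym.
  have K2 : #|U| + #|P| <= omega_on S + 1.
    have cU : #|U :\ u| + 1 = #|U| by rewrite (cardsD1 u U) uU addnC.
    suff : #|U :\ u| + #|P| <= omega_on S by lia.
    apply: leq_trans (om_ge (A := (U :\ u) :|: P) _ _).
    - rewrite cardsU.
      have -> : (U :\ u) :&: P = set0.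
        apply/setP => z; rewrite in_setI in_setD1 in_set0; apply/negP => /andP [/andP [_ zU] zP].
        by move: (NU z (subsetP sPN _ zP)); rewrite zU.
      by rewrite cards0 subn0.
    - rewrite subUset (subset_trans (subD1set _ _) sUS) /=.
      by apply: subset_trans sPN _; apply/subsetP => y; rewrite inE => /andP [].
    - move=> a b; rewrite !in_setU !in_setD1 => /orP [/andP [nau aU]|aP] /orP [/andP [nbu bU]|bP] nab.
      + exact: R1.
      + move: bP; rewrite inE => /andP [_ /forall_inP /(_ a aU)]; rewrite nau /= => eba.
        by rewrite e_sym.
      + by move: aP; rewrite inE => /andP [_ /forall_inP /(_ b bU)]; rewrite nbu.
      + apply: (Ncl u uS) => //; by apply: (subsetP sPN).
  case: (set_0Vmem P) => [P0 | [y0 y0P]].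
    have := KR Q (subsetDl _ _) (fun y1 y2 y1Q _ _ => introT orP (or_introl y1Q)).
    rewrite cN P0 cards0; lia.
  have y0nQ : y0 \notin Q by rewrite inE y0P.
  have sR : y0 |: Q \subset N by rewrite subUset sub1set (subsetP sPN _ y0P) subsetDl.
  have HR : forall y1 y2, y1 \in y0 |: Q -> y2 \in y0 |: Q -> y1 != y2 -> (y1 \in Q) || (y2 \in Q).
    move=> y1 y2; rewrite !in_setU1 => /orP [/eqP->|->] /orP [/eqP->|->] //=;
      by rewrite ?orbT ?eqxx.
  have := KR (y0 |: Q) sR HR; rewrite cardsU1 y0nQ /=.
  have : 0 < #|U| by apply/card_gt0P; exists u.
  move: K2; rewrite cN; lia.
case: hasv => [S0 | [v vS Hv]].
  by have := chi_card S; rewrite S0 cards0; lia.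
have cpart : #|S| = #|[set y in S | e v y]| + 1 + #|[set y in S | (y != v) && ~~ e v y]|.
  rewrite -(cardsID [set y | e v y] S).
  have -> : S :&: [set y | e v y] = [set y in S | e v y].
    by apply/setP => y; rewrite !inE.
  have -> : #|S :\: [set y | e v y]| = 1 + #|[set y in S | (y != v) && ~~ e v y]|.
    rewrite (cardsD1 v (S :\: _)) !inE e_irr vS /=; congr (_ + _).
    by apply: eq_card => y; rewrite !inE; case: (y \in S); case: (y == v); case: (e v y).
  by rewrite addnA.
have := Delta_ge vS; lia.
Qed.


Lemma remove_indep (S I : {set T}) : I \subset S -> indepP I ->
  [/\ mychi S <= mychi (S :\: I) + 1, #|S| = #|S :\: I| + #|I| &
      omega_on (S :\: I) <= omega_on S].
Proof.
move=> sIS iI; split.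
- have sub : S \subset (S :\: I) :|: I by apply/subsetP => z zS; rewrite !inE zS; case: (z \in I).
  have := chi_sub sub; have := chi_union (S :\: I) I; have := chi_indep iI; lia.
- by rewrite -(cardsID I S) (setIidPr sIS) addnC.
- by apply: om_sub; apply: subsetDl.
Qed.

Lemma card3 (x y z : T) : x != y -> y != z -> x != z -> #|[set x; y; z]| = 3.
Proof.
move=> nxy nyz nxz.
rewrite -setUA cardsU1 !inE negb_or nxy nxz /= cards2 nyz.
done.
Qed.

Lemma LH n (S H : {set T}) : #|S| <= n -> H \subset S ->
  4 * mychi S + #|H| <= 2 * omega_on S + #|S| + Delta_on S + 1 + 3 * mychi H.
Proof.
elim: n S H => [|n IH] S H cS sHS.
  have := chi_card S; have := subset_leq_card sHS; lia.
case: (set_0Vmem S) => [S0|[s0 s0S]].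
  have := chi_card S; have := subset_leq_card sHS; rewrite S0 cards0; lia.
have om1 := om_pos s0S.
case: (set_0Vmem H) => [H0 | [h0 h0H]].
  rewrite H0 cards0 chi0.
  case: (boolP [exists I0 : {set T}, [&& I0 \subset S, indepb I0 & 2 < #|I0|]]).
    move=> /existsP [I0 /and3P [sI0 /indepbP iI0 cI0]].
    have [I [s1 s2 iI Hmax]] := indep_ext sI0 iI0.
    have [c1 c2 c3] := remove_indep s2 iI.
    have cI : 2 < #|I| := leq_trans cI0 (subset_leq_card s1).
    case: (set_0Vmem (S :\: I)) => [S'0 | [z0 z0S']].
      move: c1; rewrite S'0 chi0; lia.
    have dD : Delta_on (S :\: I) < Delta_on S.
      apply: (Delta_drop (subsetDl _ _) z0S') => z; rewrite inE => /andP [znI zS].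
      have [w wI ezw] := Hmax z zS znI.
      by exists w => //; rewrite !inE wI (subsetP s2 _ wI).
    have := IH (S :\: I) set0 ltac:(lia) (sub0set _); rewrite cards0 chi0.
    lia.
  move=> /existsPn noI.
  suff : no3 S by move/T2; lia.
  move=> x y z xS yS zS nxy nyz nxz; apply: contraT => Hn; exfalso.
  move: (noI [set x; y; z]); rewrite card3 // andbT.
  have -> : [set x; y; z] \subset S.
    by apply/subsetP => a; rewrite !inE => /orP [/orP [] | ] /eqP ->.
  move=> /negP; apply; apply/indepbP => a b; rewrite !inE => Ha Hb.
  move: Hn; rewrite !negb_or => /and3P [n1 n2 n3].
  case/orP: Ha => [/orP [] | ] /eqP ->; case/orP: Hb => [/orP [] | ] /eqP ->;
    rewrite ?e_irr //; by rewrite // e_sym.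
have [fH [HfH HcH]] := chi_spec H.
set c := fH h0.
set C := [set x in H | fH x == c].
have sCS : C \subset S by apply: subset_trans sHS; apply/subsetP => x; rewrite inE => /andP [].
have iC : indepP C.
  move=> x y; rewrite !inE => /andP [xH /eqP fx] /andP [yH /eqP fy]; apply/negP => exy.
  by move: (HfH x y xH yH exy); rewrite fx fy eqxx.
have [I [s1 s2 iI Hmax]] := indep_ext sCS iC.
have [c1 c2 c3] := remove_indep s2 iI.
set H' := H :\: I.
have cH : #|H| <= #|H'| + #|I|.
  have sub : H \subset H' :|: I by apply/subsetP => z zH; rewrite !inE zH; case: (z \in I).
  by apply: leq_trans (subset_leq_card sub) (leq_card_setU _ _).
have chH : mychi H' + 1 <= mychi H.
  have Hp : pcol H' fH by apply: properP_sub HfH; apply: subsetDl.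
  have sub : fH @: H' \subset (fH @: H) :\ c.
    apply/subsetP => d /imsetP [x]; rewrite inE => /andP [xnI xH] ->.
    rewrite !inE imset_f // andbT; apply: contraNneq xnI => fxc.
    by apply: (subsetP s1); rewrite inE xH fxc eqxx.
  have := subset_leq_card sub; have := cardsD1 c (fH @: H); rewrite imset_f //.
  have := chi_le Hp; lia.
case: (set_0Vmem (S :\: I)) => [S'0 | [z0 z0S']].
  have := chi_pos h0H; have := subset_leq_card sHS.
  move: c1; rewrite S'0 chi0; lia.
have dD : Delta_on (S :\: I) < Delta_on S.
  apply: (Delta_drop (subsetDl _ _) z0S') => z; rewrite inE => /andP [znI zS].
  have [w wI ezw] := Hmax z zS znI.
  by exists w => //; rewrite !inE wI (subsetP s2 _ wI).
have sH' : H' \subset S :\: I by apply: setSD.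
have cI : 0 < #|I| by apply/card_gt0P; exists h0; apply: (subsetP s1); rewrite inE h0H eqxx.
have := IH (S :\: I) H' ltac:(lia) sH'.
lia.
Qed.


Lemma join_thm (A B H : {set T}) a0 b0 : a0 \in A -> b0 \in B ->
  (forall x y, x \in A -> y \in B -> e x y) -> H \subset A :|: B ->
  4 * mychi (A :|: B) + #|H| <=
    2 * omega_on (A :|: B) + 2 * Delta_on (A :|: B) + 2 + 3 * mychi H.
Proof.
move=> a0A b0B Hj sH.
have AB0 : A :&: B = set0.
  apply/setP => x; rewrite !inE; apply/negP => /andP [xA xB].
  by move: (Hj x x xA xB); rewrite e_irr.
set HA := H :&: A; set HB := H :&: B.
have HU : H = HA :|: HB by rewrite -setIUr (setIidPl sH).
have cH : #|H| = #|HA| + #|HB|.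
  rewrite HU cardsU.
  have -> : HA :&: HB = set0.
    by apply/setP => x; rewrite !inE; apply/negP => /andP [/andP [_ xA] /andP [_ xB]];
      move: (Hj x x xA xB); rewrite e_irr.
  by rewrite cards0 subn0.
have chH : mychi HA + mychi HB <= mychi H.
  rewrite HU; apply: chi_join => x y; rewrite !inE => /andP [_ xA] /andP [_ yB]; exact: Hj.
have chU := chi_union A B.
have omU : omega_on A + omega_on B <= omega_on (A :|: B).
  have [QA [sQA clA cQA]] := om_spec A; have [QB [sQB clB cQB]] := om_spec B.
  rewrite -cQA -cQB.
  have -> : #|QA| + #|QB| = #|QA :|: QB|.
    rewrite cardsU.
    have -> : QA :&: QB = set0.
      apply/setP => x; rewrite !inE; apply/negP => /andP [xA xB].
      by move: (Hj x x (subsetP sQA _ xA) (subsetP sQB _ xB)); rewrite e_irr.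
    by rewrite cards0 subn0.
  apply: om_ge; first by apply: setUSS.
  move=> x y; rewrite !inE => /orP [xA|xB] /orP [yA|yB] nxy.
  - exact: clA.
  - exact: Hj (subsetP sQA _ xA) (subsetP sQB _ yB).
  - by rewrite e_sym; exact: Hj (subsetP sQA _ yA) (subsetP sQB _ xB).
  - exact: clB.
have DA : #|B| + Delta_on A <= Delta_on (A :|: B).
  have [x xA ->] := Delta_spec a0A.
  apply: leq_trans (Delta_ge (x := x) _); last by rewrite inE xA.
  rewrite addnC.
  have -> : #|[set y in A | e x y]| + #|B| = #|[set y in A | e x y] :|: B|.
    rewrite cardsU.
    have -> : [set y in A | e x y] :&: B = set0.
      apply/setP => y; rewrite !inE; apply/negP => /andP [/andP [yA _] yB].
      by move: (Hj y y yA yB); rewrite e_irr.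
    by rewrite cards0 subn0.
  apply: subset_leq_card; apply/subsetP => y; rewrite !inE.
  case/orP => [/andP [yA exy] | yB]; first by rewrite yA exy.
  by rewrite yB orbT (Hj x y xA yB).
have DB : #|A| + Delta_on B <= Delta_on (A :|: B).
  have [x xB ->] := Delta_spec b0B.
  apply: leq_trans (Delta_ge (x := x) _); last by rewrite inE xB orbT.
  rewrite addnC.
  have -> : #|[set y in B | e x y]| + #|A| = #|[set y in B | e x y] :|: A|.
    rewrite cardsU.
    have -> : [set y in B | e x y] :&: A = set0.
      apply/setP => y; rewrite !inE; apply/negP => /andP [/andP [yB _] yA].
      by move: (Hj y y yA yB); rewrite e_irr.
    by rewrite cards0 subn0.
  apply: subset_leq_card; apply/subsetP => y; rewrite !inE.
  case/orP => [/andP [yB eyx] | yA]; first by rewrite yB orbT eyx.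
  by rewrite yA (e_sym x y) (Hj y x yA xB).
have sHA : HA \subset A by apply: subsetIr.
have sHB : HB \subset B by apply: subsetIr.
have LA := LH (leqnn _) sHA; have LB := LH (leqnn _) sHB.
have OA := chi_omH sHA; have OB := chi_omH sHB.
have PA := chi_om (leqnn _) (S := A); have PB := chi_om (leqnn _) (S := B).
case: (leqP (4 * mychi A + #|HA| + 2 * omega_on B + 3 * mychi HB + 2 * Delta_on B)
             (4 * mychi B + #|HB| + 2 * omega_on A + 3 * mychi HA + 2 * Delta_on A)) => Hc;
  lia.
Qed.


Lemma bigmin_le (I : finType) (P : pred I) (F : I -> nat) x j :
  P j -> \big[minn/x]_(i | P i) F i <= F j.
Proof.
move=> Pj; rewrite unlock /=.
have : j \in index_enum I by rewrite mem_index_enum.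
elim: (index_enum I) => // a r IH; rewrite inE /= => /orP [/eqP <-|jr].
  by rewrite Pj geq_minl.
case: (P a); last exact: IH.
by apply: leq_trans (geq_minr _ _) (IH jr).
Qed.

Lemma col_chi (S : {set T}) k : colorable_on e S k -> mychi S <= k.
Proof.
move=> /existsP [f /forallP Hf].
have Hp : pcol S f.
  move=> x y xS yS exy; move: (Hf x); rewrite xS /= => /forallP /(_ y).
  by rewrite yS exy.
apply: leq_trans (chi_le Hp) _.
by apply: leq_trans (max_card _) _; rewrite card_ord.
Qed.

Lemma chi_le_chion (S : {set T}) : mychi S <= chi_on e S.
Proof.
rewrite /chi_on; apply: (big_ind (fun m => mychi S <= m)).
- by apply: leq_trans (chi_card S) (max_card _).
- by move=> a b Ha Hb; rewrite leq_min Ha Hb.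
- by move=> i Hi; apply: col_chi.
Qed.

Lemma chion_le_chi : chi_on e setT <= mychi setT.
Proof.
have [f [Hf Hc]] := chi_spec setT.
set m := mychi setT.
set A := f @: setT.
have Hi : forall x, index (f x) (enum A) < m.
  move=> x; apply: leq_trans Hc; rewrite cardE index_mem mem_enum; apply: imset_f.
  by rewrite in_setT.
have Hcol : colorable_on e setT m.
  apply/existsP; exists [ffun x => Ordinal (Hi x)].
  apply/forallP => x; apply/implyP => _; apply/forallP => y; apply/implyP => _.
  apply/implyP => exy; rewrite !ffunE; apply/negP => /eqP [] E.
  have := Hf x y (in_setT x) (in_setT y) exy.
  rewrite (@index_inj _ (f x) (enum A) (f x) (f y)) ?eqxx // mem_enum imset_f //;
    by rewrite in_setT.
have mT : m < #|T|.+1 by rewrite ltnS; apply: leq_trans (chi_card _) (max_card _).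
rewrite /chi_on; apply: (@bigmin_le _ _ (fun i : 'I_#|T|.+1 => (i : nat)) #|T| (Ordinal mT)).
exact: Hcol.
Qed.


Lemma omega_eq : omega e = omega_on setT.
Proof. by rewrite /omega /omega_on; apply: eq_bigl => A; rewrite subsetT. Qed.

Lemma Delta_eq : Delta e = Delta_on setT.
Proof.
rewrite /Delta /Delta_on; apply: eq_big => [x|x _]; first by rewrite in_setT.
by apply: eq_card => y; rewrite !inE.
Qed.

Lemma kappa_case :
  (compl_complete e /\ kappa_compl e = #|T| - 1) \/
  exists K, compl_disconnected_by e K /\ #|K| <= kappa_compl e.
Proof.
rewrite /kappa_compl; case: ifP => Hc; first by left.
right.
have [x [y [nxy exy]]] : exists x y, x != y /\ e x y.
  move/negbT: Hc => /forallPn [x /forallPn [y]]; rewrite negb_imply => /andP [nxy].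
  rewrite /compl_rel nxy /= negbK => exy; by exists x, y.
have D0 : compl_disconnected_by e (~: [set x; y]).
  apply/existsP; exists x; apply/existsP; exists y.
  rewrite !inE !eqxx orbT /=; apply/negP => /connectP [p Hp Ey].
  case: p Hp Ey => [_ /= Ey|b p /= /andP [Hxb _] _]; first by move: nxy; rewrite -Ey eqxx.
  move: Hxb; rewrite !inE !negbK /compl_rel => /and3P [_ /orP [/eqP ->|/eqP ->]].
    by rewrite eqxx.
  by rewrite exy andbF.
apply: (big_ind (fun m => exists K, compl_disconnected_by e K /\ #|K| <= m)).
- by exists (~: [set x; y]); split => //; apply: max_card.
- move=> a b [K1 [D1 c1]] [K2 [D2 c2]]; case: (leqP a b) => ab.
    by exists K1; split => //; rewrite (minn_idPl ab).
  by exists K2; split => //; rewrite (minn_idPr (ltnW ab)).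
- by move=> K DK; exists K; split.
Qed.

Lemma nat_main (H : {set T}) (h0 : T) : h0 \in H ->
  4 * chi e + #|H| <= 2 * omega e + 2 * Delta e + 2 + 5 * kappa_compl e + 3 * chi_on e H.
Proof.
move=> h0H.
have c1 : chi e <= mychi setT by apply: chion_le_chi.
have c2 : mychi H <= chi_on e H by apply: chi_le_chion.
have cH : 0 < mychi H := chi_pos h0H.
rewrite omega_eq Delta_eq.
case: kappa_case => [[Hc ->] | [K [DK cK]]].
  have iT : indepP setT.
    move=> a b _ _; case: (eqVneq a b) => [->|nab]; first by rewrite e_irr.
    by move/forallP: Hc => /(_ a) /forallP /(_ b); rewrite nab /= /compl_rel nab.
  have := chi_indep iT; have := om_pos (in_setT h0).
  have : #|H| <= #|T| by apply: max_card.
  have : 0 < #|T| by apply/card_gt0P; exists h0.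
  lia.
move: DK => /existsP [u /existsP [v /and3P [uK vK nuv]]].
set r := (fun x y => [&& x \notin K, y \notin K & compl_rel e x y]).
set A := [set z | (z \notin K) && connect r u z].
set B := (~: K) :\: A.
have uA : u \in A by rewrite inE uK connect0.
have vB : v \in B by rewrite !inE vK andbT (negbTE nuv) andbF.
have Hj : forall x y, x \in A -> y \in B -> e x y.
  move=> x y xA yB; move: xA; rewrite inE => /andP [xK cx].
  move: yB; rewrite in_setD in_setC => /andP [/negP yA yK].
  apply: contraT => nexy; exfalso; apply: (yA); rewrite inE yK /=.
  apply: connect_trans (cx) (connect1 _).
  rewrite /r xK yK /compl_rel nexy andbT /=.
        by apply/eqP => Exy; apply: (yA); rewrite inE -Exy xK cx.
have AB : A :|: B = ~: K.
  apply/setP => z; rewrite !inE; case: (z \in K); rewrite ?andbF ?andbT //=.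
  by case: (connect r u z).
have sH : H :&: ~: K \subset A :|: B by rewrite AB subsetIr.
have J := join_thm uA vB Hj sH; rewrite AB in J.
have sub : setT \subset (~: K) :|: K by apply/subsetP => z _; rewrite !inE; case: (z \in K).
have := chi_sub sub; have := chi_union (~: K) K; have := chi_card K.
have := om_sub (subsetT (~: K)); have := Delta_sub (subsetT (~: K)).
have := chi_sub (subsetIl H (~: K)).
have : #|H| <= #|H :&: ~: K| + #|K|.
  have sub2 : H \subset (H :&: ~: K) :|: K by apply/subsetP => z zH; rewrite !inE zH; case: (z \in K).
  by apply: leq_trans (subset_leq_card sub2) (leq_card_setU _ _).
lia.
Qed.

End Graph.

Local Open Scope ring_scope.

Theorem corollary5 (T : finType) (e : rel T)
    (e_sym : symmetric e) (e_irr : irreflexive e)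
    (H : {set T}) (H_nonempty : H != set0) :
  ((chi e)%:R : rat) <=
    ((omega e)%:R + (Delta e)%:R + 1) / 2
    + (5 * (kappa_compl e)%:R + 3 * (chi_on e H)%:R - (#|H|)%:R) / 4.
Proof.
have [h0 h0H] := set0Pn _ H_nonempty.
have N := nat_main e_sym e_irr h0H.
have Nr : ((4 * chi e + #|H|)%N%:R : rat) <=
    (2 * omega e + 2 * Delta e + 2 + 5 * kappa_compl e + 3 * chi_on e H)%N%:R.
  by rewrite ler_nat.
rewrite !natrD in Nr.
lra.
Qed.
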